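(* Let $S^+=\{\overline{\jmath}_1,\dots,\overline{\jmath}_\nu\}$ be distinct positive integers, $S=S^+\cup(-S^+)$, $S^c=\mathbb{Z}\setminus(S\cup\{0\})$, and $\xi\in[1,2]^\nu$ (indexed by $S^+$, $\xi_{\overline{\jmath}_i}=\xi_i$). Define for $j\in S^c$ $$\mathfrak l_j:=\frac23\sum_{j_2\in S^+}\frac{(1+j_2^2)(1+j^2)(2+j_2^2+j^2)}{(3+j_2^2-j_2j+j^2)(3+j_2^2+j_2j+j^2)}\xi_{j_2},\qquad c:=\frac23\sum_{j\in S^+}(1+j^2)\xi_j,$$ and $\kappa_j:=\lambda(j)(\mathfrak l_j-c)$, where $\lambda(j)=j\frac{4+j^2}{1+j^2}$. Then there is a constant $C>0$ depending on the set $S$ such that $|j|\,|\kappa_j|\le C$ for all $j\in S^c$. *)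

(* Defs.v *)
From HB Require Import structures.
From mathcomp Require Import all_boot all_order all_algebra.
From mathcomp Require Import reals.
Set Implicit Arguments. Unset Strict Implicit. Unset Printing Implicit Defensive.
Import Order.TTheory GRing.Theory Num.Theory.
Local Open Scope ring_scope.

(* S^+ is given as a duplicate-free sequence sp of positive integers;
   xi is a function on integers, only its values on S^+ matter. *)

Definition in_Sc (sp : seq int) (j : int) : bool :=
  [&& j != 0, j \notin sp & - j \notin sp].

Definition lam {R : realType} (j : int) : R :=
  (j%:~R) * (4 + (j%:~R) ^+ 2) / (1 + (j%:~R) ^+ 2).

Definition frakl {R : realType} (sp : seq int) (xi : int -> R) (j : int) : R :=
  2 / 3 * \sum_(j2 <- sp)
    ((1 + (j2%:~R) ^+ 2) * (1 + (j%:~R) ^+ 2) * (2 + (j2%:~R) ^+ 2 + (j%:~R) ^+ 2)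
     / ((3 + (j2%:~R) ^+ 2 - (j2%:~R) * (j%:~R) + (j%:~R) ^+ 2)
        * (3 + (j2%:~R) ^+ 2 + (j2%:~R) * (j%:~R) + (j%:~R) ^+ 2)) * xi j2).

Definition cconst {R : realType} (sp : seq int) (xi : int -> R) : R :=
  2 / 3 * \sum_(j <- sp) (1 + (j%:~R) ^+ 2) * xi j.

Definition kappa {R : realType} (sp : seq int) (xi : int -> R) (j : int) : R :=
  lam j * (frakl sp xi j - cconst sp xi).

(* Main.v *)
Require Import Defs.
From HB Require Import structures.
From mathcomp Require Import all_boot all_order all_algebra.
From mathcomp Require Import reals.
From mathcomp Require Import ring lra.
Import Order.TTheory GRing.Theory Num.Theory.
Local Open Scope ring_scope.

Lemma term_bound (R : realFieldType) (a x : R) :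
  `|x| * `|x * (4 + x ^+ 2) / (1 + x ^+ 2)| *
  `|(1 + a ^+ 2) * (1 + x ^+ 2) * (2 + a ^+ 2 + x ^+ 2)
     / ((3 + a ^+ 2 - a * x + x ^+ 2) * (3 + a ^+ 2 + a * x + x ^+ 2)) - (1 + a ^+ 2)|
  <= 4 * ((1 + a ^+ 2) * (10 + 5 * a ^+ 2 + a ^+ 2 ^+ 2)).
Proof.
set A := a ^+ 2; set B := x ^+ 2.
have A0 : 0 <= A by rewrite /A sqr_ge0.
have B0 : 0 <= B by rewrite /B sqr_ge0.
have eD : (3 + A - a * x + B) * (3 + A + a * x + B)
   = 9 + A ^+ 2 + B ^+ 2 + 6 * A + 6 * B + A * B by rewrite /A /B; ring.
set D := 9 + A ^+ 2 + B ^+ 2 + 6 * A + 6 * B + A * B.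
have D0 : 0 < D by rewrite /D; nra.
set N := 7 + 5 * A + 3 * B + A ^+ 2.
have N0 : 0 <= N by rewrite /N; nra.
have B1 : 0 < 1 + B by lra.
rewrite eD.
have -> : (1 + A) * (1 + B) * (2 + A + B) / D - (1 + A) = - ((1 + A) * N / D).
  have gen : forall A B : R, 9 + A ^+ 2 + B ^+ 2 + 6 * A + 6 * B + A * B != 0 ->
    (1 + A) * (1 + B) * (2 + A + B) / (9 + A ^+ 2 + B ^+ 2 + 6 * A + 6 * B + A * B) - (1 + A)
    = - ((1 + A) * (7 + 5 * A + 3 * B + A ^+ 2) / (9 + A ^+ 2 + B ^+ 2 + 6 * A + 6 * B + A * B)).
    by move=> A' B' h; field.
  by rewrite gen ?gt_eqF // xB.
have A1 : 0 <= 1 + A by lra.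
rewrite normrN !normrM !normfV (ger0_norm A1) (ger0_norm N0) (gtr0_norm D0)
  (gtr0_norm B1).
rewrite [`|4 + B|]ger0_norm; last by lra.
have xB : `|x| * `|x| = B by rewrite -normrM -/(x ^+ 2) -/B ger0_norm.
have -> : `|x| * (`|x| * (4 + B) / (1 + B)) * ((1 + A) * N / D)
   = (B * (4 + B) * (1 + A) * N) / ((1 + B) * D).
  have gen : forall y b c n d e : R, d != 0 -> e != 0 ->
    y * (y * (4 + b) / d) * (c * n / e) = (y * y * (4 + b) * c * n) / (d * e).
    by move=> y b c n d e hd he; field; rewrite hd he.
  by rewrite gen ?gt_eqF // xB.
rewrite ler_pdivrMr; last by rewrite mulr_gt0.
have h1 : 4 + B <= 4 * (1 + B) by lra.
have h2 : B * N <= (10 + 5 * A + A ^+ 2) * D.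
  rewrite /N /D; nra.
have h3 : 0 <= 1 + A by lra.
have : (4 + B) * (B * N) <= (4 * (1 + B)) * ((10 + 5 * A + A ^+ 2) * D).
  apply: ler_pM => //; [lra| nra].
move=> h; have := ler_wpM2l h3 h.
rewrite /A; move=> h'; rewrite -/A; nra.
Qed.

Theorem lemma7p3 (R : realType) (sp : seq int) :
  uniq sp -> all (fun j => 0 < j) sp ->
  exists C : R, 0 < C /\
    forall (xi : int -> R),
      (forall j, j \in sp -> 1 <= xi j <= 2) ->
      forall j : int, in_Sc sp j ->
        `|(j%:~R : R)| * `|kappa sp xi j| <= C.
Proof.
move=> _ _.
pose f (a : int) : R := 4 * ((1 + (a%:~R) ^+ 2) * (10 + 5 * (a%:~R) ^+ 2 + (a%:~R) ^+ 2 ^+ 2)) * 2.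
have f0 : forall a, 0 <= f a.
  move=> a; rewrite /f; have h := sqr_ge0 (a%:~R : R); nra.
have S0 : 0 <= \sum_(a <- sp) f a by apply: sumr_ge0 => a _.
exists (1 + 2 / 3 * \sum_(a <- sp) f a); split; first by lra.
move=> xi hxi j _.
set x : R := j%:~R.
rewrite /kappa /frakl /cconst -mulrBr -sumrB.
set s := \sum_(i <- sp) _.
have h23 : 0 <= 2/3 :> R by lra.
rewrite (normrM (lam j)) (normrM (2/3)) (ger0_norm h23).
have h : `|x| * `|lam j| * `|s| <= \sum_(a <- sp) f a.
  apply: le_trans; first by apply: ler_wpM2l; [rewrite mulr_ge0|apply: ler_norm_sum].
  rewrite mulr_sumr big_seq [X in _ <= X]big_seq; apply: ler_sum => a ha.
  rewrite -mulrBl [`|_ * xi a|]normrM mulrA.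
  have := hxi a ha => /andP [x1 x2].
  rewrite /f; apply: ler_pM.
  - by rewrite !mulr_ge0.
  - by [].
  - exact: term_bound.
  - rewrite ger0_norm //; lra.
have -> : `|x| * (`|lam j| * (2 / 3 * `|s|)) = 2/3 * (`|x| * `|lam j| * `|s|) by ring.
have := ler_wpM2l h23 h; lra.
Qed.
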